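(* Let $I$ be a finite or infinite non-empty index set and let $\mathbb{K}$ be a positive commutative monoid such that the inner consistency property holds for $\mathbb{K}$-relations via a join operation $\bowtie_{\mathbb{K}}$. Then the inner consistency property holds for $\mathbb{K}^I_{\mathrm{fin}}$-relations via the component-wise join operation $\bowtie^I_{\mathbb{K}}$. Furthermore, if $\bowtie_{\mathbb{K}}$ produces $c$-sparse witnesses for some positive real $c$, then for $\mathbb{K}^I_{\mathrm{fin}}$-relations $R,S$ the witness $R\bowtie^I_{\mathbb{K}}S$ is $cd$-sparse, where $d$ is any bound on the number of non-zero components of the annotation of any tuple in the supports of $R$ or $S$. In particular, if $I$ is finite and the inner consistency property holds for $\mathbb{K}$-relations with sparse witnesses, then the inner consistency property holds for $\mathbb{K}^I$-relations with sparse witnesses.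
   Context: Positive: $p+q=0\Rightarrow p=q=0$. $\mathbb{K}^I$: maps $I\to K$ with pointwise addition; $\mathbb{K}^I_{\mathrm{fin}}$: those with finitely many non-zero values. For a finite attribute set $X$ (attributes have domains), a $\mathbb{M}$-relation over $X$ is a map $R$ from $X$-tuples to the monoid's universe with finite support $R'=\{t:R(t)\ne0\}$; $t[Y]$ is restriction; marginals $R[Y](t)=\sum_{r\in R',r[Y]=t}R(r)$. $R(X),S(Y)$ are inner consistent if $R[X\cap Y]=S[X\cap Y]$; a $W$ over $X\cup Y$ witnesses their consistency if $W[X]=R$, $W[Y]=S$. A join operation assigns to each pair of inner consistent $\mathbb{K}$-relations $R(X),S(Y)$ a $\mathbb{K}$-relation $R\bowtie_{\mathbb{K}}S$ over $X\cup Y$; the inner consistency property holds via it if $R\bowtie_{\mathbb{K}}S$ always witnesses consistency of $R,S$. It produces $c$-sparse witnesses if moreover $|(R\bowtie_{\mathbb{K}}S)'|\le(|R'|+|S'|)c$ always. The inner consistency property holds with sparse witnesses if there is $c>0$ such that any two inner consistent relations have a witness $W$ with $|W'|\le(|R'|+|S'|)c$. Component-wise join: for inner consistent $\mathbb{K}^I_{\mathrm{fin}}$-relations $R(X),S(Y)$, take a fresh attribute $C$ with domain $I$, define $\mathbb{K}$-relations $R_0(X\cup\{C\})$, $S_0(Y\cup\{C\})$ by $R_0(r,i)=R(r)(i)$, $S_0(s,i)=S(s)(i)$, and let $(R\bowtie^I_{\mathbb{K}}S)(t)(i)=(R_0\bowtie_{\mathbb{K}}S_0)(t,i)$ for $X\cup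 Y$-tuples $t$ and $i\in I$. *)

(* Defs.v *)
From HB Require Import structures.
From mathcomp Require Import all_boot all_order all_algebra.
From mathcomp Require Import finmap.
From mathcomp Require Import boolp functions.
From Stdlib Require Import ClassicalEpsilon.
From Stdlib Require Import Reals.

Set Implicit Arguments.
Unset Strict Implicit.
Unset Printing Implicit Defensive.

Import GRing.Theory.
Local Open Scope fset_scope.
Local Open Scope ring_scope.

(* An attribute universe is a choiceType [A] together with a domain     *)
(* map [dom : A -> Type].  A schema is a finite set of attributes       *)

Section Tuples.
Variables (A : choiceType) (dom : A -> Type).

Definition tup (X : {fset A}) := forall a : X, dom (fsval a).

Definition restr (X Y : {fset A}) (H : Y `<=` X) (t : tup X) : tup Y :=
  fun a => t (fincl H a).

(* Extension of a Z0-tuple t by the value i (of a fresh attribute C with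
   domain I, eC : dom C = I) to a tuple over a schema Z contained in C |` Z0. *)
Lemma ext_mem (Z0 Z : {fset A}) (C : A) (H : Z `<=` C |` Z0) (a : Z) :
  fsval a != C -> fsval a \in Z0.
Proof.
move=> ne; have := fsubsetP H _ (fsvalP a).
by rewrite in_fset1U (negbTE ne).
Qed.

Definition ext_tup (I : Type) (Z0 Z : {fset A}) (C : A) (eC : dom C = I)
    (H : Z `<=` C |` Z0) (t : tup Z0) (i : I) : tup Z :=
  fun a =>
    match fsval a =P C with
    | ReflectT e => eq_rect_r dom (eq_rect_r (fun T : Type => T) i eC) e
    | ReflectF ne => t [` ext_mem H (introN eqP ne)]
    end.

End Tuples.

Section Relations.
Variable (M : nmodType).

Definition enumerates (T : Type) (f : T -> M) (s : seq T) :=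
  List.NoDup s /\ forall t, List.In t s <-> f t <> 0.

Definition finsupp (T : Type) (f : T -> M) := exists s : seq T, enumerates f s.

(* a chosen enumeration of the support (meaningful when finsupp f) *)
Definition supp_list (T : Type) (f : T -> M) : seq T :=
  epsilon (inhabits [::]) (enumerates f).

Definition supp_size (T : Type) (f : T -> M) : nat := size (supp_list f).

Variables (A : choiceType) (dom : A -> Type).

Definition is_rel (X : {fset A}) (R : tup dom X -> M) := finsupp R.

Definition marg (X Y : {fset A}) (H : Y `<=` X) (R : tup dom X -> M)
    : tup dom Y -> M :=
  fun t => \sum_(r <- supp_list R | `[< restr H r = t >]) R r.

Definition inner_consistent (X Y : {fset A})
    (R : tup dom X -> M) (S : tup dom Y -> M) :=
  marg (fsubsetIl X Y) R = marg (fsubsetIr X Y) S.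

Definition witnesses (X Y : {fset A})
    (R : tup dom X -> M) (S : tup dom Y -> M) (W : tup dom (X `|` Y) -> M) :=
  marg (fsubsetUl X Y) W = R /\ marg (fsubsetUr X Y) W = S.

End Relations.

(* A (total) join operation on M-relations; only its values on inner
   consistent pairs matter. *)
Definition join_op (M : nmodType) (A : choiceType) (dom : A -> Type) :=
  forall X Y : {fset A},
    (tup dom X -> M) -> (tup dom Y -> M) -> (tup dom (X `|` Y) -> M).

Section Properties.
Variables (M : nmodType) (A : choiceType) (dom : A -> Type).
Variable (isrel : forall X : {fset A}, (tup dom X -> M) -> Prop).
(* [isrel] is the predicate "is an M-relation"; it is [is_rel] for
   K-relations and [is_rel] plus finiteness of every annotation for
   K^I_fin-relations. *)

Definition icp_via (join : join_op M dom) :=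
  forall (X Y : {fset A}) (R : tup dom X -> M) (S : tup dom Y -> M),
    isrel R -> isrel S -> inner_consistent R S ->
    isrel (join X Y R S) /\ witnesses R S (join X Y R S).

Definition sparse_via (join : join_op M dom) (c : R) :=
  icp_via join /\
  forall (X Y : {fset A}) (R : tup dom X -> M) (S : tup dom Y -> M),
    isrel R -> isrel S -> inner_consistent R S ->
    (INR (supp_size (join X Y R S))
       <= (INR (supp_size R) + INR (supp_size S)) * c)%R.

Definition icp_sparse :=
  exists c : R, (0 < c)%R /\
  forall (X Y : {fset A}) (R : tup dom X -> M) (S : tup dom Y -> M),
    isrel R -> isrel S -> inner_consistent R S ->
    exists W : tup dom (X `|` Y) -> M,
      isrel W /\ witnesses R S W /\
      (INR (supp_size W) <= (INR (supp_size R) + INR (supp_size S)) * c)%R.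

End Properties.

(* K^I_fin-relations: (I -> K)-valued relations (K^I with pointwise
   addition) with finite support all of whose annotations have finitely
   many non-zero components. *)
Definition is_fin_rel (K : nmodType) (I : Type) (A : choiceType)
    (dom : A -> Type) (X : {fset A}) (R : tup dom X -> (I -> K)) :=
  is_rel R /\ forall t, finsupp (R t).

(* The component-wise join.  [fresh Z] is a chosen attribute not in Z  *)
(* with domain I (witnessed by [efresh Z : dom (fresh Z) = I]).          *)

Section CompJoin.
Variables (K : nmodType) (I : Type) (A : choiceType) (dom : A -> Type).
Variables (fresh : {fset A} -> A) (efresh : forall Z, dom (fresh Z) = I).

(* R_0 over C |` X:  R_0(r, i) = R(r)(i) *)
Definition lift_rel (C : A) (eC : dom C = I) (X : {fset A})
    (R : tup dom X -> (I -> K)) : tup dom (C |` X) -> K :=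
  fun u => R (restr (fsubsetU1 C X) u)
             (eq_rect _ (fun T : Type => T) (u [` fset1U1 C X]) _ eC).

Lemma comp_join_sub (C : A) (X Y : {fset A}) :
  (C |` X) `|` (C |` Y) `<=` C |` (X `|` Y).
Proof.
apply/fsubsetP => a; rewrite !inE.
by case/orP => /orP [] ->; rewrite ?orbT.
Qed.

(* (R join^I S)(t)(i) = (R_0 join S_0)(t, i) *)
Definition comp_join (join : join_op K dom) : join_op (I -> K) dom :=
  fun X Y R S t i =>
    let C := fresh (X `|` Y) in
    join _ _ (lift_rel (efresh (X `|` Y)) R) (lift_rel (efresh (X `|` Y)) S)
      (ext_tup (efresh (X `|` Y)) (@comp_join_sub C X Y) t i).

End CompJoin.

(* Main.v *)
Require Import Defs.
From HB Require Import structures.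
From mathcomp Require Import all_boot all_order all_algebra.
From mathcomp Require Import finmap.
From mathcomp Require Import boolp functions.
From Stdlib Require Import Reals ClassicalEpsilon.

Set Implicit Arguments.
Unset Strict Implicit.
Unset Printing Implicit Defensive.
Import GRing.Theory.
Local Open Scope fset_scope.
Local Open Scope ring_scope.

Definition cl {T : Type} (s : seq T) : seq {classic T} := s.

Lemma inE_In (T : eqType) (x : T) s : x \in s <-> List.In x s.
Proof.
elim: s => //= y s IH; rewrite in_cons; split.
  by case/orP => [/eqP->|/IH]; auto.
by case=> [->|/IH->]; rewrite ?eqxx ?orbT.
Qed.

Lemma uniq_NoDup (T : eqType) (s : seq T) : uniq s <-> List.NoDup s.
Proof.
elim: s => [|x s IH] /=; split => //; first by constructor.
  case/andP => nx us; constructor; last by apply/IH.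
  by rewrite -inE_In; apply/negP.
move=> H; inversion H; subst; apply/andP; split; last by apply/IH.
by apply/negP; rewrite inE_In.
Qed.

Lemma cl_NoDup (T : Type) (s : seq T) : uniq (cl s) <-> List.NoDup s.
Proof. exact: (@uniq_NoDup {classic T} s). Qed.

Lemma cl_In (T : Type) (x : T) (s : seq T) : ((x : {classic T}) \in cl s) <-> List.In x s.
Proof. exact: (@inE_In {classic T} x s). Qed.

Section Gen.
Variable M : nmodType.

Lemma finsupp_cover (T : Type) (f : T -> M) (l : seq {classic T}) :
  (forall t : T, f t != 0 -> (t : {classic T}) \in l) -> Defs.finsupp f.
Proof.
move=> H; exists (undup (filter (fun x : {classic T} => f (x : T) != 0) l)); split.
  by apply/cl_NoDup; rewrite undup_uniq.
move=> t; rewrite -(cl_In t) /cl mem_undup mem_filter.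
split; first by case/andP => /eqP.
by move=> /eqP ft; rewrite ft H.
Qed.

Lemma supp_listP (T : Type) (f : T -> M) : Defs.finsupp f -> enumerates f (supp_list f).
Proof. by move=> [s Hs]; exact: (epsilon_spec _ _ (ex_intro _ s Hs)). Qed.

Lemma supp_uniq (T : Type) (f : T -> M) : Defs.finsupp f -> uniq (cl (supp_list f)).
Proof. by move=> /supp_listP [/cl_NoDup]. Qed.

Lemma mem_supp (T : Type) (f : T -> M) : Defs.finsupp f ->
  forall t : T, ((t : {classic T}) \in cl (supp_list f)) = (f t != 0).
Proof.
move=> /supp_listP [_ H] t; apply/idP/idP.
  by move/cl_In/H/eqP.
by move/eqP/H/cl_In.
Qed.

Lemma sum_cover (T : eqType) (g : T -> M) (s1 s2 : seq T) :
  uniq s1 -> uniq s2 -> (forall t, g t != 0 -> t \in s1) ->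
  (forall t : T, g t != 0 -> t \in s2) ->
  \sum_(x <- s1) g x = \sum_(x <- s2) g x.
Proof.
move=> u1 u2 c1 c2.
have H s : \sum_(x <- s) g x = \sum_(x <- [seq x <- s | g x != 0]) g x.
  rewrite big_filter [RHS]big_mkcond; apply: eq_bigr => x _.
  by case: eqP => // ->.
rewrite H [RHS]H; apply: perm_big; apply: uniq_perm; rewrite ?filter_uniq //.
move=> x; rewrite !mem_filter; case: (g x != 0) /idP => //= gx.
by rewrite c1 ?c2.
Qed.

Lemma sum_ind1 (T : eqType) (f : T -> M) (s : seq T) (a : T) :
  uniq s -> (forall t : T, f t != 0 -> t \in s) ->
  \sum_(i <- s) (if i == a then f i else 0) = f a.
Proof.
move=> us c; case: (boolP (a \in s)) => ha.
  rewrite (bigD1_seq a) //= eqxx big1 ?addr0 // => i /negbTE ->; done.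
have fa : f a = 0 by apply/eqP; apply: contraNT ha => /c.
rewrite big1_seq // => i _; case: eqP => // ->; done.
Qed.

End Gen.
Lemma cast_rK (T U : Type) (e : T = U) (i : U) :
  eq_rect T (fun S : Type => S) (eq_rect_r (fun S : Type => S) i e) U e = i.
Proof. by destruct e. Qed.

Lemma cast_Kr (T U : Type) (e : T = U) (x : T) :
  eq_rect_r (fun S : Type => S) (eq_rect T (fun S : Type => S) x U e) e = x.
Proof. by destruct e. Qed.

Lemma match_reflect (P : Prop) (b : bool) (r : reflect P b) (T : Type)
  (f : P -> T) (g : ~ P -> T) (v : T) :
  (forall p, f p = v) -> (forall np, g np = v) ->
  match r with ReflectT p => f p | ReflectF np => g np end = v.
Proof. by case: r. Qed.

Lemma match_reflect_app (P : Prop) (b : bool) (r : reflect P b) (T U : Type)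
  (h : T -> U) (f : P -> T) (g : ~ P -> T) (v : U) :
  (forall p, h (f p) = v) -> (forall np, h (g np) = v) ->
  h (match r with ReflectT p => f p | ReflectF np => g np end) = v.
Proof. by case: r. Qed.

Section Tup.
Variables (A : choiceType) (dom : A -> Type).

Lemma tup_irr (X : {fset A}) (t : tup dom X) (x : A) (p q : x \in X) :
  t [` p] = t [` q].
Proof. by rewrite (bool_irrelevance p q). Qed.

Lemma restr_restr (X Y Z : {fset A}) (H1 : Y `<=` X) (H2 : Z `<=` Y)
  (H3 : Z `<=` X) (t : tup dom X) : restr H2 (restr H1 t) = restr H3 t.
Proof.
apply: functional_extensionality_dep => -[x xa].
rewrite /restr /fincl; exact: (@tup_irr X t x).
Qed.

Lemma restr_irr (X Y : {fset A}) (H1 H2 : Y `<=` X) (t : tup dom X) :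
  restr H1 t = restr H2 t.
Proof. by rewrite (bool_irrelevance H1 H2). Qed.

Variables (I : Type) (C : A) (eC : dom C = I).

Definition castC (x : dom C) : I := eq_rect _ (fun S : Type => S) x _ eC.

Section Frame.
Variables (Z0 Z : {fset A}) (hZ : Z `<=` C |` Z0) (hZ0 : Z0 `<=` Z)
  (hC : C \in Z) (nC : C \notin Z0).

Definition EE (t : tup dom Z0) (i : I) : tup dom Z := ext_tup eC hZ t i.
Definition PP (u : tup dom Z) : tup dom Z0 := restr hZ0 u.
Definition QQ (u : tup dom Z) : I := castC (u [` hC]).

Lemma PE t i : PP (EE t i) = t.
Proof.
apply: functional_extensionality_dep => -[x xa].
rewrite /PP /EE /restr /ext_tup /=.
apply: match_reflect => [e|ne].
  by case/negP: nC; rewrite -e.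
exact: tup_irr.
Qed.

Lemma QE t i : QQ (EE t i) = i.
Proof.
rewrite /QQ /EE /ext_tup /=.
apply: (@match_reflect_app _ _ _ (dom (fsval [` hC])) I castC) => [e|ne]; last by case: ne.
rewrite (eq_irrelevance e erefl) /=.
exact: cast_rK.
Qed.

Lemma EPQ u : EE (PP u) (QQ u) = u.
Proof.
apply: functional_extensionality_dep => -[x xa].
rewrite /PP /EE /QQ /restr /ext_tup /=.
apply: match_reflect => [e|ne].
  subst x; rewrite /castC cast_Kr /=; exact: tup_irr.
exact: tup_irr.
Qed.

Lemma EE_inj t i t' i' : EE t i = EE t' i' -> t = t' /\ i = i'.
Proof. by move=> e; split; [rewrite -(PE t i) e PE | rewrite -(QE t i) e QE]. Qed.

End Frame.

Section TwoFrames.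
Variables (Z0 Z : {fset A}) (hZ : Z `<=` C |` Z0) (hZ0 : Z0 `<=` Z)
  (hC : C \in Z) (nC : C \notin Z0).
Variables (W0 W : {fset A}) (hW : W `<=` C |` W0) (hW0 : W0 `<=` W)
  (hCW : C \in W) (nCW : C \notin W0).
Variables (HW : W `<=` Z) (HW0 : W0 `<=` Z0).

Lemma restr_EE t i : restr HW (EE hZ t i) = EE hW (restr HW0 t) i.
Proof.
rewrite -[LHS](EPQ hW hW0 hCW); congr EE.
  have H : W0 `<=` Z by apply: fsubset_trans HW0 hZ0.
  rewrite /PP (restr_restr HW hW0 H) -(restr_restr hZ0 HW0 H).
  by congr restr; apply: PE.
rewrite -{2}(QE hZ hC t i) /QQ /restr /fincl; congr castC; exact: tup_irr.
Qed.

End TwoFrames.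
End Tup.

Section Core.
Variables (A : choiceType) (dom : A -> Type) (I : Type) (C : A) (eC : dom C = I).
Variable K : nmodType.
Variables (Z0 Z : {fset A}) (hZ : Z `<=` C |` Z0) (hZ0 : Z0 `<=` Z)
  (hC : C \in Z) (nC : C \notin Z0).

Local Notation EE1 := (EE eC hZ).
Local Notation PP1 := (@PP A dom Z0 Z hZ0).
Local Notation QQ1 := (QQ eC hC).

Definition covlist (G : tup dom Z0 -> I -> K) : seq {classic (tup dom Z)} :=
  [seq (EE1 t i : {classic (tup dom Z)}) | t <- cl (supp_list G),
     i <- cl (supp_list (G t))].

Lemma covlist_uniq G : is_fin_rel G -> uniq (covlist G).
Proof.
move=> [hG1 hG2]; rewrite /covlist; apply: (@allpairs_uniq_dep {classic (tup dom Z0)} (fun=> {classic I})); first exact: supp_uniq.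
  by move=> t _; apply: supp_uniq.
move=> [t1 i1] [t2 i2] _ _ /= H.
have [e1 e2] := EE_inj hZ0 hC nC H.
by subst.
Qed.

Lemma covlist_mem G : is_fin_rel G -> forall t i, G t i != 0 ->
  (EE1 t i : {classic (tup dom Z)}) \in covlist G.
Proof.
move=> [hG1 hG2] t i gi; rewrite /covlist; apply: (@allpairs_f_dep {classic (tup dom Z0)} (fun=> {classic I})).
  by rewrite mem_supp //; apply: contraNneq gi => ->.
by rewrite mem_supp.
Qed.

Lemma lift_finsupp (F : tup dom Z -> K) (G : tup dom Z0 -> I -> K) : (forall t i, F (EE1 t i) = G t i) -> is_fin_rel G ->
  is_rel F.
Proof.
move=> hFG hG; apply: (@finsupp_cover _ _ _ (covlist G)) => u Fu.
rewrite -(EPQ eC hZ hZ0 hC u); apply: covlist_mem => //.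
by rewrite -hFG EPQ.
Qed.

Lemma exists_nz (G : I -> K) : G != 0 -> exists i, G i != 0.
Proof.
move=> Gt; case: (pselect (exists i, G i != 0)) => // nex.
case/negP: Gt; apply/eqP; apply: funext => i.
case: (G i =P 0) => [->//|/eqP h]; case: nex; by exists i.
Qed.

Lemma lift_finrel (F : tup dom Z -> K) (G : tup dom Z0 -> I -> K) : (forall t i, F (EE1 t i) = G t i) -> is_rel F ->
  is_fin_rel G.
Proof.
move=> hFG hF; split.
  apply: (@finsupp_cover _ _ _
     [seq (PP1 u : {classic (tup dom Z0)}) | u : {classic (tup dom Z)} <- cl (supp_list F)]) => t Gt.
  have [i gi] := exists_nz Gt.
  apply/mapP; exists (EE1 t i); first by rewrite mem_supp // hFG.
  by rewrite PE.
move=> t.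
apply: (@finsupp_cover _ _ _
     [seq (QQ1 u : {classic I}) | u : {classic (tup dom Z)} <- cl (supp_list F)]) => i gi.
apply/mapP; exists (EE1 t i); first by rewrite mem_supp // hFG.
by rewrite QE.
Qed.

Lemma sumn_le (T : Type) (f : T -> nat) (s : seq T) (d : nat) :
  (forall x, List.In x s -> leq (f x) d) -> leq (sumn [seq f x | x <- s]) (muln (size s) d).
Proof.
elim: s => //= x s IH H; rewrite mulSn leq_add //; first by apply: H; left.
by apply: IH => y hy; apply: H; right.
Qed.

Lemma sumn_ge (T : Type) (f : T -> nat) (s : seq T) :
  (forall x, List.In x s -> leq 1 (f x)) -> leq (size s) (sumn [seq f x | x <- s]).
Proof.
elim: s => //= x s IH H; rewrite -addn1 addnC leq_add //; first by apply: H; left.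
by apply: IH => y hy; apply: H; right.
Qed.

Lemma size_lift_le (F : tup dom Z -> K) (G : tup dom Z0 -> I -> K) (d : nat) :
  (forall t i, F (EE1 t i) = G t i) -> is_fin_rel G ->
  (forall t, G t <> 0 -> leq (supp_size (G t)) d) ->
  leq (supp_size F) (muln (supp_size G) d).
Proof.
move=> hFG hG hd; have hF := lift_finsupp hFG hG.
have hFG' u : F u = G (PP1 u) (QQ1 u) by rewrite -hFG EPQ.
rewrite /supp_size.
apply: (@leq_trans (size (covlist G))).
  apply: (@uniq_leq_size {classic (tup dom Z)}); first exact: supp_uniq.
  move=> u; rewrite (mem_supp hF) => Fu; rewrite -(EPQ eC hZ hZ0 hC u).
  by apply: covlist_mem => //; rewrite -hFG' .
rewrite /covlist size_allpairs_dep; apply: sumn_le => t /(cl_In t).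
case: hG => hG1 hG2; rewrite (mem_supp hG1) => /eqP Gt; exact: hd.
Qed.

Lemma size_lift_ge (F : tup dom Z -> K) (G : tup dom Z0 -> I -> K) :
  (forall t i, F (EE1 t i) = G t i) -> is_rel F ->
  leq (supp_size G) (supp_size F).
Proof.
move=> hFG hF; have hG := lift_finrel hFG hF.
rewrite /supp_size.
apply: (@leq_trans (size (covlist G))).
  rewrite /covlist size_allpairs_dep; apply: sumn_ge => t /(cl_In t).
  case: hG => hG1 hG2; rewrite (mem_supp hG1) => Gt.
  have [i gi] := exists_nz Gt.
  have : (i : {classic I}) \in cl (supp_list (G t)) by rewrite mem_supp.
  by case: (cl (supp_list (G t))).
apply: (@uniq_leq_size {classic (tup dom Z)}); first exact: covlist_uniq.
rewrite /covlist => u /(@allpairsPdep {classic (tup dom Z0)} (fun=> {classic I})) [t [i [ht hi ->]]].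
rewrite (mem_supp hF) hFG; case: hG => hG1 hG2; by rewrite -(mem_supp (hG2 t)).
Qed.

Variables (W0 W : {fset A}) (hW : W `<=` C |` W0) (hW0 : W0 `<=` W)
  (hCW : C \in W) (nCW : C \notin W0) (HW : W `<=` Z) (HW0 : W0 `<=` Z0).
Variables (F : tup dom Z -> K) (G : tup dom Z0 -> I -> K).
Hypothesis hFG : forall t i, F (EE1 t i) = G t i.
Hypothesis hG : is_fin_rel G.

Lemma marg_eval (X Y : {fset A}) (H : Y `<=` X) (R : tup dom X -> I -> K) v i :
  marg H R v i = \sum_(r <- supp_list R | `[< restr H r = v >]) R r i.
Proof. by rewrite /marg fct_sumE. Qed.

Lemma marg_lift v :
  marg HW F v = marg HW0 G (PP hW0 v) (QQ eC hCW v).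
Proof.
have hF := lift_finsupp hFG hG.
have hFG' u : F u = G (PP1 u) (QQ1 u) by rewrite -hFG EPQ.
rewrite marg_eval /marg !big_mkcond /=.
transitivity (\sum_(u <- covlist G) (if `[< restr HW u = v >] then F u else 0)).
  apply: (@sum_cover _ {classic (tup dom Z)}).
  - exact: supp_uniq.
  - exact: covlist_uniq.
  - move=> u; case: ifP => _ Fu; last by rewrite eqxx in Fu.
    by rewrite (mem_supp hF).
  - move=> u; case: ifP => _ Fu; first (rewrite -(EPQ eC hZ hZ0 hC u)); last by rewrite eqxx in Fu. rewrite -(EPQ eC hZ hZ0 hC u).
    by apply: covlist_mem => //; rewrite -hFG' EPQ.
rewrite /covlist big_allpairs_dep [RHS]big_mkcond /=; apply: eq_bigr => t _.
case: (asboolP (restr HW0 t = PP hW0 v)) => [e|ne].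
  transitivity (\sum_(i <- cl (supp_list (G t)))
      (if (i : {classic I}) == QQ eC hCW v then G t i else 0)).
    apply: eq_bigr => i _; rewrite hFG (restr_EE eC hZ hZ0 hC nC hW hW0 hCW HW HW0).
    have -> : `[< EE eC hW (restr HW0 t) i = v >] = ((i : {classic I}) == QQ eC hCW v).
      apply/asboolP/eqP => [<-|->]; first by rewrite QE.
      by rewrite e EPQ.
    done.
  apply: sum_ind1; first by apply: supp_uniq; case: hG.
  by move=> i gi; rewrite mem_supp //; case: hG.
rewrite big1 // => i _; rewrite (restr_EE eC hZ hZ0 hC nC hW hW0 hCW HW HW0).
case: ifP => // /asboolP h; case: ne.
by rewrite -h (PE eC hW hW0 nCW).
Qed.

End Core.

Section Main.
Variables (K : nmodType) (I : Type) (A : choiceType) (dom : A -> Type)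
  (fresh : {fset A} -> A)
  (fresh_notin : forall Z : {fset A}, fresh Z \notin Z)
  (efresh : forall Z : {fset A}, dom (fresh Z) = I).
Variable join : join_op K dom.
Hypothesis hjoin : icp_via (fun X (R : tup dom X -> K) => is_rel R) join.
Variables (X Y : {fset A}) (R : tup dom X -> I -> K) (S : tup dom Y -> I -> K).
Hypotheses (hR : is_fin_rel R) (hS : is_fin_rel S) (hIC : inner_consistent R S).

Let C := fresh (X `|` Y).
Let eC : dom C = I := efresh (X `|` Y).

Lemma nCU : C \notin X `|` Y. Proof. exact: fresh_notin. Qed.
Lemma nCX : C \notin X.
Proof. by apply: contra nCU; rewrite inE => ->. Qed.
Lemma nCY : C \notin Y.
Proof. by apply: contra nCU; rewrite inE => ->; rewrite orbT. Qed.
Lemma nCI : C \notin X `&` Y.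
Proof. by apply: contra nCX; rewrite inE => /andP[]. Qed.

Lemma sub1 (Z : {fset A}) : C |` Z `<=` C |` Z. Proof. exact: fsubset_refl. Qed.

Definition R0 := lift_rel eC R.
Definition S0 := lift_rel eC S.

Lemma R0E t i : R0 (EE eC (sub1 X) t i) = R t i.
Proof.
change (R (PP (fsubsetU1 C X) (EE eC (sub1 X) t i))
          (QQ eC (fset1U1 C X) (EE eC (sub1 X) t i)) = R t i).
by rewrite (PE eC (sub1 X) (fsubsetU1 C X) nCX) QE.
Qed.

Lemma S0E t i : S0 (EE eC (sub1 Y) t i) = S t i.
Proof.
change (S (PP (fsubsetU1 C Y) (EE eC (sub1 Y) t i))
          (QQ eC (fset1U1 C Y) (EE eC (sub1 Y) t i)) = S t i).
by rewrite (PE eC (sub1 Y) (fsubsetU1 C Y) nCY) QE.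
Qed.

Lemma R0_rel : is_rel R0.
Proof. exact: (lift_finsupp (fsubsetU1 C X) (fset1U1 C X) R0E hR). Qed.
Lemma S0_rel : is_rel S0.
Proof. exact: (lift_finsupp (fsubsetU1 C Y) (fset1U1 C Y) S0E hS). Qed.

Lemma hWI : (C |` X) `&` (C |` Y) `<=` C |` (X `&` Y).
Proof.
apply/fsubsetP => a; rewrite !inE; case: (a == C) => //=; by case/andP => -> ->.
Qed.
Lemma hWI0 : X `&` Y `<=` (C |` X) `&` (C |` Y).
Proof.
apply/fsubsetP => a; rewrite !inE; by case/andP => -> ->; rewrite !orbT.
Qed.
Lemma hCI : C \in (C |` X) `&` (C |` Y).
Proof. by rewrite !inE eqxx. Qed.

Lemma IC0 : inner_consistent R0 S0.
Proof.
rewrite /inner_consistent; apply: functional_extensionality_dep => v.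
rewrite (marg_lift (fsubsetU1 C X) (fset1U1 C X) nCX hWI hWI0 hCI nCI
   (fsubsetIl (C |` X) (C |` Y)) (fsubsetIl X Y) R0E hR v).
rewrite (marg_lift (fsubsetU1 C Y) (fset1U1 C Y) nCY hWI hWI0 hCI nCI
   (fsubsetIr (C |` X) (C |` Y)) (fsubsetIr X Y) S0E hS v).
by rewrite hIC.
Qed.

Definition J := join R0 S0.
Definition Wj := comp_join efresh join R S.

Lemma hJ : is_rel J /\ witnesses R0 S0 J.
Proof. exact: (hjoin R0_rel S0_rel IC0). Qed.

Definition hZU : (C |` X) `|` (C |` Y) `<=` C |` (X `|` Y) :=
  comp_join_sub C X Y.
Lemma hZU0 : X `|` Y `<=` (C |` X) `|` (C |` Y).
Proof.
apply/fsubsetP => a; rewrite !inE; by case/orP => ->; rewrite !orbT.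
Qed.
Lemma hCU : C \in (C |` X) `|` (C |` Y).
Proof. by rewrite !inE eqxx. Qed.

Lemma WJ t i : J (EE eC hZU t i) = Wj t i.
Proof. reflexivity. Qed.

Lemma Wj_fin : is_fin_rel Wj.
Proof. exact: (lift_finrel hZU0 hCU nCU WJ (proj1 hJ)). Qed.

Lemma Wj_wit : witnesses R S Wj.
Proof.
have [_ [wR wS]] := hJ.
split; apply: functional_extensionality_dep => r; apply: funext => i.
  have := marg_lift hZU0 hCU nCU (sub1 X) (fsubsetU1 C X) (fset1U1 C X) nCX
    (fsubsetUl (C |` X) (C |` Y)) (fsubsetUl X Y) WJ Wj_fin (EE eC (sub1 X) r i).
  rewrite (PE eC (sub1 X) (fsubsetU1 C X) nCX) QE => <-.
  by rewrite /J wR R0E.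
have := marg_lift hZU0 hCU nCU (sub1 Y) (fsubsetU1 C Y) (fset1U1 C Y) nCY
  (fsubsetUr (C |` X) (C |` Y)) (fsubsetUr X Y) WJ Wj_fin (EE eC (sub1 Y) r i).
rewrite (PE eC (sub1 Y) (fsubsetU1 C Y) nCY) QE => <-.
by rewrite /J wS S0E.
Qed.

Lemma Wj_size : leq (supp_size Wj) (supp_size J).
Proof. exact: (size_lift_ge hZU0 hCU nCU WJ (proj1 hJ)). Qed.

Lemma R0_size d : (forall t, R t <> 0 -> leq (supp_size (R t)) d) ->
  leq (supp_size R0) (muln (supp_size R) d).
Proof. move=> hd; exact: (size_lift_le (fsubsetU1 C X) (fset1U1 C X) R0E hR hd). Qed.

Lemma S0_size d : (forall t, S t <> 0 -> leq (supp_size (S t)) d) ->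
  leq (supp_size S0) (muln (supp_size S) d).
Proof. move=> hd; exact: (size_lift_le (fsubsetU1 C Y) (fset1U1 C Y) S0E hS hd). Qed.


End Main.

Theorem proposition31
  (* the positive commutative monoid K *)
  (K : nmodType)
  (K_positive : forall p q : K, p + q = 0 -> p = 0 /\ q = 0)
  (* the non-empty index set I *)
  (I : Type) (I_nonempty : inhabited I)
  (* the attribute universe, and a choice of fresh attributes of domain I *)
  (A : choiceType) (dom : A -> Type)
  (fresh : {fset A} -> A)
  (fresh_notin : forall Z : {fset A}, fresh Z \notin Z)
  (efresh : forall Z : {fset A}, dom (fresh Z) = I) :
  (* (1) inner consistency via the component-wise join *)
  (forall join : join_op K dom,
     icp_via (fun X (R : tup dom X -> K) => is_rel R) join ->
     icp_via (fun X (R : tup dom X -> (I -> K)) => is_fin_rel R)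
       (comp_join efresh join))
  /\
  (* (2) c-sparse witnesses for K give cd-sparse witnesses for K^I_fin *)
  (forall (join : join_op K dom) (c : R),
     (0 < c)%R ->
     sparse_via (fun X (R : tup dom X -> K) => is_rel R) join c ->
     forall (d : nat) (X Y : {fset A})
            (R : tup dom X -> (I -> K)) (S : tup dom Y -> (I -> K)),
       is_fin_rel R -> is_fin_rel S -> inner_consistent R S ->
       (forall t, R t <> 0 -> leq (supp_size (R t)) d) ->
       (forall t, S t <> 0 -> leq (supp_size (S t)) d) ->
       (INR (supp_size (comp_join efresh join R S))
          <= (INR (supp_size R) + INR (supp_size S)) * (c * INR d))%R)
  /\
  (* (3) for finite I: sparse witnesses for K give sparse witnesses for K^I *)
  ((exists l : seq I, forall i, List.In i l) ->
   icp_sparse (fun X (R : tup dom X -> K) => is_rel R) ->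
   icp_sparse (fun X (R : tup dom X -> (I -> K)) => is_rel R)).
Proof.
have P1 : forall join : join_op K dom,
     icp_via (fun X (R : tup dom X -> K) => is_rel R) join ->
     icp_via (fun X (R : tup dom X -> (I -> K)) => is_fin_rel R)
       (comp_join efresh join).
  move=> join hjoin X Y R S hR hS hIC; split.
    exact: (Wj_fin fresh_notin efresh hjoin hR hS hIC).
  exact: (Wj_wit fresh_notin efresh hjoin hR hS hIC).
have P2 : forall (join : join_op K dom) (c : R),
     (0 < c)%R ->
     sparse_via (fun X (R : tup dom X -> K) => is_rel R) join c ->
     forall (d : nat) (X Y : {fset A})
            (R : tup dom X -> (I -> K)) (S : tup dom Y -> (I -> K)),
       is_fin_rel R -> is_fin_rel S -> inner_consistent R S ->
       (forall t, R t <> 0 -> leq (supp_size (R t)) d) ->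
       (forall t, S t <> 0 -> leq (supp_size (S t)) d) ->
       (INR (supp_size (comp_join efresh join R S))
          <= (INR (supp_size R) + INR (supp_size S)) * (c * INR d))%R.
  move=> join c c0 [hjoin hsp] d X Y R S hR hS hIC hdR hdS.
  have h1 := Wj_size fresh_notin efresh hjoin hR hS hIC.
  have h2 := hsp _ _ _ _ (R0_rel fresh_notin efresh Y hR)
     (S0_rel fresh_notin efresh X hS) (IC0 fresh_notin efresh hR hS hIC).
  have h3 := R0_size fresh_notin efresh Y hR hdR.
  have h4 := S0_size fresh_notin efresh X hS hdS.
  apply: (Rle_trans _ _ _ (le_INR _ _ (ssrnat.leP h1))).
  apply: (Rle_trans _ _ _ h2).
  have e : ((INR (supp_size R) + INR (supp_size S)) * (c * INR d) =
     (INR (muln (supp_size R) d) + INR (muln (supp_size S) d)) * c)%R.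
    rewrite !mult_INR; ring.
  rewrite e; apply: Rmult_le_compat_r; first exact: Rlt_le.
  apply: Rplus_le_compat; apply: le_INR; exact/ssrnat.leP.
split; first exact: P1.
split; first exact: P2.
move=> [l hl] [c [c0 Hc]].
pose Pj X Y (R : tup dom X -> K) (S : tup dom Y -> K) (W : tup dom (X `|` Y) -> K) :=
  is_rel W /\ witnesses R S W /\
  (INR (supp_size W) <= (INR (supp_size R) + INR (supp_size S)) * c)%R.
pose joinE : join_op K dom := fun X Y R S =>
  epsilon (inhabits (fun _ => 0)) (Pj X Y R S).
have hspec X Y (R : tup dom X -> K) (S : tup dom Y -> K) :
    is_rel R -> is_rel S -> inner_consistent R S -> Pj X Y R S (joinE X Y R S).
  move=> hR hS hIC; apply: epsilon_spec; exact: Hc.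
have hsp : sparse_via (fun X (R : tup dom X -> K) => is_rel R) joinE c.
  split.
    by move=> X Y R S hR hS hIC; have [h1 [h2 _]] := hspec X Y R S hR hS hIC.
  by move=> X Y R S hR hS hIC; have [_ [_ h3]] := hspec X Y R S hR hS hIC.
have hfin X (R : tup dom X -> I -> K) : is_rel R -> is_fin_rel R.
  move=> hR; split => // t.
  apply: (@finsupp_cover _ _ _ (cl l)) => i _; exact/cl_In.
have hd X (R : tup dom X -> I -> K) : is_rel R ->
    forall t, R t <> 0 -> leq (supp_size (R t)) (size l).
  move=> hR t _; rewrite /supp_size.
  apply: (@uniq_leq_size {classic I}); first by apply: supp_uniq; case: (hfin X R hR).
  move=> i _; exact/cl_In.
have l0 : (0 < INR (size l))%R.
  apply: lt_0_INR; case: I_nonempty => i0; have := hl i0.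
  case: l {hl hd} => [[]|x s _] /=; exact/ssrnat.ltP.
exists (c * INR (size l))%R; split; first exact: Rmult_lt_0_compat.
move=> X Y R S hR hS hIC.
exists (comp_join efresh joinE R S).
have [hW1 hW2] := P1 joinE hsp.1 X Y R S (hfin X R hR) (hfin Y S hS) hIC.
split; first exact: hW1.1.
split; first exact: hW2.
exact: (P2 joinE c c0 hsp (size l) X Y R S (hfin X R hR) (hfin Y S hS) hIC
  (hd X R hR) (hd Y S hS)).
Qed.
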